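(* Let $(J,S)$ be a homogeneous $d$-dimensional multi-time Markov renewal chain with semi-Markov kernel $q$. Then for all $i,j\in E$, $$g_{ij}=q_{ij}+\sum_{r\in E,\ r\ne j}q_{ir}*g_{rj}.$$
   Context: $E=\{1,\dots,s\}$. Convolution of real sequences on $\mathbb{N}^d$: $[a*b](k)=\sum_{l+l'=k}a(l)b(l')$. $\mathbb{N}^d$ has the componentwise partial order, $k<l$ meaning $k\le l$, $k\ne l$. A homogeneous $d$-dimensional multi-time Markov renewal chain is a process $(J_n,S_n)_{n\in\mathbb{N}}$, $J_n\in E$, $S_n\in\mathbb{N}^d$, $S_0=0_d$, $S_n<S_{n+1}$, with a.s. $\mathbb{P}(J_{n+1}=j,S_{n+1}-S_n=k\mid J_{0:n},S_{0:n})=q_{J_nj}(k)$, $q_{ij}(k)=\mathbb{P}(J_{n+1}=j,S_{n+1}-S_n=k\mid J_n=i)$ independent of $n$. $\mathbb{P}_i$: probability given $J_0=i$. With $m_j=\min\{l\ge1:J_l=j\}$, $g_{ij}(k)=\mathbb{P}_i(S_{m_j}=k)$, $k\in\mathbb{N}^d$. *)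

(* Defs.v *)
From HB Require Import structures.
From mathcomp Require Import all_boot all_order all_algebra.
From mathcomp Require Import all_classical all_reals all_analysis.
Set Implicit Arguments. Unset Strict Implicit. Unset Printing Implicit Defensive.
Import Order.TTheory GRing.Theory Num.Theory.
Local Open Scope classical_set_scope.
Local Open Scope ring_scope.

Notation natvec d := {ffun 'I_d -> nat}.

Definition vle d (k l : natvec d) : Prop := forall t : 'I_d, (k t <= l t)%N.
Definition vlt d (k l : natvec d) : Prop := vle k l /\ k <> l.

Definition vzero d : natvec d := [ffun _ => 0%N].
Definition vsub d (k l : natvec d) : natvec d := [ffun t => (k t - l t)%N].

(* Convolution on N^d: [a*b](k) = sum_{l + l' = k} a(l) b(l'),
   the pairs (l, l') with l + l' = k being exactly (l, k - l) with l <= k. *)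
Definition mrconv (R : pzRingType) d (a b : natvec d -> R) (k : natvec d) : R :=
  \sum_(l : {dffun forall t : 'I_d, 'I_(k t).+1})
     a [ffun t => nat_of_ord (l t)] * b [ffun t => (k t - l t)%N].

Definition history (T : Type) s d (J : nat -> T -> 'I_s) (S : nat -> T -> natvec d)
  (n : nat) (js : nat -> 'I_s) (ss : nat -> natvec d) : set T :=
  [set w | forall m, (m <= n)%N -> J m w = js m /\ S m w = ss m].

(* (J,S) is a homogeneous d-dimensional multi-time Markov renewal chain with
   semi-Markov kernel q under the probability P (discrete form of the
   a.s. conditional-probability identity). *)
Definition is_MRC (R : realType) (dT : measure_display) (T : measurableType dT)
  (P : probability T R) s d (J : nat -> T -> 'I_s) (S : nat -> T -> natvec d)
  (q : 'I_s -> 'I_s -> natvec d -> R) : Prop :=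
  [/\ forall n j, measurable [set w | J n w = j],
      forall n k, measurable [set w | S n w = k],
      forall w, S 0%N w = vzero d,
      forall n w, vlt (S n w) (S n.+1 w) &
      forall n js ss j k,
        P (history J S n js ss `&` [set w | J n.+1 w = j /\ vsub (S n.+1 w) (S n w) = k])
        = ((q (js n) j k)%:E * P (history J S n js ss))%E].

(* The event {S_{m_j} = k}, with m_j = min {l >= 1 : J_l = j} (requires m_j finite). *)
Definition first_passage_at (T : Type) s d (J : nat -> T -> 'I_s) (S : nat -> T -> natvec d)
  (j : 'I_s) (k : natvec d) : set T :=
  [set w | exists l, [/\ (0 < l)%N, J l w = j,
                         (forall l', (0 < l')%N -> (l' < l)%N -> J l' w <> j) &
                         S l w = k]].

Definition g_fun (R : realType) (dT : measure_display) (T : measurableType dT)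
  s d (P : 'I_s -> probability T R) (J : nat -> T -> 'I_s) (S : nat -> T -> natvec d)
  (i j : 'I_s) (k : natvec d) : R :=
  fine (P i (first_passage_at J S j k)).

(* Main.v *)
Require Import Defs.
From HB Require Import structures.
From mathcomp Require Import all_boot all_order all_algebra.
From mathcomp Require Import all_classical all_reals all_analysis.
From mathcomp Require Import zify.
Set Implicit Arguments. Unset Strict Implicit.
Import Order.TTheory GRing.Theory Num.Theory.
Local Open Scope classical_set_scope.
Local Open Scope ring_scope.

Fixpoint FPr (T : Type) s d (J : nat -> T -> 'I_s) (S : nat -> T -> natvec d)
  (j : 'I_s) (k : natvec d) (N m : nat) {struct N} : set T :=
  match N with
  | 0 => set0
  | N'.+1 => [set w | J m.+1 w = j /\ S m.+1 w = k] `|`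
             ([set w | J m.+1 w <> j] `&` FPr J S j k N' m.+1)
  end.

Fixpoint Phi (R : realType) s d (q : 'I_s -> 'I_s -> natvec d -> R) (j : 'I_s)
  (N : nat) : 'I_s -> natvec d -> R :=
  match N with
  | 0 => fun _ _ => 0
  | N'.+1 => fun a x => q a j x + \sum_(r < s | r != j) mrconv (q a r) (Phi q j N' r) x
  end.

Lemma FPr_meas (dT : measure_display) (T : measurableType dT) s d
  (J : nat -> T -> 'I_s) (S : nat -> T -> natvec d) j k :
  (forall n j, measurable [set w | J n w = j]) ->
  (forall n k, measurable [set w | S n w = k]) ->
  forall N m, measurable (FPr J S j k N m).
Proof.
move=> mJ mS; elim=> [|N IH] m /=; first exact: measurable0.
apply: measurableU.
  have -> : [set w | J m.+1 w = j /\ S m.+1 w = k] =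
    [set w | J m.+1 w = j] `&` [set w | S m.+1 w = k] by [].
  exact: measurableI.
apply: measurableI => //; exact: (measurableC (mJ _ _)).
Qed.

Lemma hist_S (T : Type) s d (J : nat -> T -> 'I_s) (S : nat -> T -> natvec d) n js ss :
  history J S n.+1 js ss =
  history J S n js ss `&` [set w | J n.+1 w = js n.+1 /\ S n.+1 w = ss n.+1].
Proof.
apply/seteqP; split => w /=.
  by move=> h; split; [move=> m mn; apply: h; exact: leqW | exact: h].
move=> [h e] m; rewrite leq_eqVlt => /orP[/eqP -> // | ]; rewrite ltnS; exact: h.
Qed.

Lemma hist_0 (T : Type) s d (J : nat -> T -> 'I_s) (S : nat -> T -> natvec d) js ss :
  history J S 0 js ss = [set w | J 0 w = js 0 /\ S 0 w = ss 0].
Proof.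
apply/seteqP; split => w /=; first by apply.
by move=> h m; rewrite leqn0 => /eqP ->.
Qed.

Lemma hist_meas (dT : measure_display) (T : measurableType dT) s d
  (J : nat -> T -> 'I_s) (S : nat -> T -> natvec d) :
  (forall n j, measurable [set w | J n w = j]) ->
  (forall n k, measurable [set w | S n w = k]) ->
  forall n js ss, measurable (history J S n js ss).
Proof.
move=> mJ mS; elim=> [|n IH] js ss.
  rewrite hist_0; have -> : [set w | J 0%N w = js 0%N /\ S 0%N w = ss 0%N] =
    [set w | J 0%N w = js 0%N] `&` [set w | S 0%N w = ss 0%N] by [].
  exact: measurableI.
rewrite hist_S; apply: measurableI => //.
have -> : [set w | J n.+1 w = js n.+1 /\ S n.+1 w = ss n.+1] =
    [set w | J n.+1 w = js n.+1] `&` [set w | S n.+1 w = ss n.+1] by [].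
exact: measurableI.
Qed.

Lemma hist_ext (T : Type) s d (J : nat -> T -> 'I_s) (S : nat -> T -> natvec d) n js ss js' ss' :
  (forall m, (m <= n)%N -> js m = js' m /\ ss m = ss' m) ->
  history J S n js ss = history J S n js' ss'.
Proof.
move=> E; apply/seteqP; split => w /= h m mn; have [e1 e2] := E m mn.
  by rewrite -e1 -e2; exact: h.
by rewrite e1 e2; exact: h.
Qed.

Lemma vsub_eq d (a x y : natvec d) : vle a x -> vle a y -> vsub x a = vsub y a -> x = y.
Proof.
move=> hx hy /ffunP E; apply/ffunP => t; have := E t; rewrite !ffunE => e.
by rewrite -(subnK (hx t)) e subnK.
Qed.

Lemma MRC' (R : realType) (dT : measure_display) (T : measurableType dT)
  (P : probability T R) s d (J : nat -> T -> 'I_s) (S : nat -> T -> natvec d) q :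
  is_MRC P J S q -> forall n js ss r x, vle (ss n) x ->
  P (history J S n js ss `&` [set w | J n.+1 w = r /\ S n.+1 w = x]) =
  ((q (js n) r (vsub x (ss n)))%:E * P (history J S n js ss))%E.
Proof.
case=> _ _ _ hlt hM n js ss r x hx; rewrite -hM; congr (P _).
apply/seteqP; split => w /= [hw [Jw Sw]]; split => //; split => //.
  by rewrite Sw (hw n (leqnn n)).2.
have e := (hw n (leqnn n)).2.
apply: (@vsub_eq _ (ss n)) => //; last by rewrite -Sw e.
by rewrite -e; case: (hlt n w).
Qed.

Lemma useq_meas (d0 : measure_display) (T0 : measurableType d0) (I : eqType)
  (F : I -> set T0) (s : seq I) :
  (forall i, measurable (F i)) -> measurable [set w | exists2 i, i \in s & F i w].
Proof.
move=> mF; elim: s => [|x s IH].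
  by rewrite (_ : [set w | _] = set0) //; apply/seteqP; split => w //= [].
rewrite (_ : [set w | _] = F x `|` [set w | exists2 i, i \in s & F i w]).
  exact: measurableU.
apply/seteqP; split => w /=.
  by move=> [i]; rewrite inE => /orP[/eqP -> |]; [left|right; exists i].
by case=> [Fx|[i si Fi]]; [exists x; rewrite ?inE ?eqxx|exists i; rewrite ?inE ?si ?orbT].
Qed.

Lemma part_seq (d0 : measure_display) (T0 : measurableType d0) (R0 : realType)
  (mu : {measure set T0 -> \bar R0}) (I : eqType) (F : I -> set T0) (A : set T0) (s : seq I) :
  uniq s -> measurable A -> (forall i, measurable (F i)) ->
  (forall i i', i != i' -> F i `&` F i' = set0) ->
  mu (A `&` [set w | exists2 i, i \in s & F i w]) = (\sum_(i <- s) mu (A `&` F i))%E.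
Proof.
move=> + mA mF dF; elim: s => [|x s IH] /=.
  move=> _; rewrite big_nil (_ : _ `&` _ = set0) ?measure0 //.
  by apply/seteqP; split => w //= [_ []].
move=> /andP[xs us]; rewrite big_cons -IH //.
rewrite (_ : _ `&` _ = (A `&` F x) `|` (A `&` [set w | exists2 i, i \in s & F i w])).
  rewrite measureU //; [exact: measurableI|apply: measurableI => //; exact: useq_meas|].
  apply/seteqP; split => w //= [[_ Fx] [_ [i si Fi]]].
  have : x != i by apply: contraNneq xs => ->.
  by move/dF => /seteqP[+ _] => /(_ w) /=; apply.
apply/seteqP; split => w /=.
  move=> [Aw [i]]; rewrite inE => /orP[/eqP -> |]; [by left|by right; split => //; exists i].
case=> [[Aw Fx]|[Aw [i si Fi]]]; split => //; [exists x; rewrite ?inE ?eqxx|exists i; rewrite ?inE ?si ?orbT] => //.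
Qed.

Lemma part_fin (d0 : measure_display) (T0 : measurableType d0) (R0 : realType)
  (mu : {measure set T0 -> \bar R0}) (I : finType) (F : I -> set T0) (A : set T0) :
  measurable A -> (forall i, measurable (F i)) ->
  (forall i i', i != i' -> F i `&` F i' = set0) ->
  (forall w, A w -> exists i, F i w) ->
  mu A = (\sum_(i : I) mu (A `&` F i))%E.
Proof.
move=> mA mF dF cov.
rewrite -big_enum /= -part_seq ?enum_uniq //; congr (mu _).
apply/seteqP; split => w /=; last by case.
by move=> Aw; split => //; have [i Fi] := cov w Aw; exists i; rewrite ?mem_enum.
Qed.
Definition lv d (k : natvec d) (l : {dffun forall t : 'I_d, 'I_(k t).+1}) : natvec d :=
  [ffun t => nat_of_ord (l t)].
Lemma lv_inj d (k : natvec d) : injective (@lv d k).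
Proof.
move=> l l' /ffunP E; apply/ffunP => t; apply/val_inj => /=.
by have := E t; rewrite !ffunE.
Qed.
Lemma mk_l d (k : natvec d) (x : natvec d) : vle x k -> exists l : {dffun forall t : 'I_d, 'I_(k t).+1}, lv l = x.
Proof.
move=> H.
exists (@finfun _ (fun t => 'I_(k t).+1) (fun t => inord (x t))).
by apply/ffunP => t; rewrite !ffunE inordK // ltnS.
Qed.

Definition vadd d (a b : natvec d) : natvec d := [ffun t => (a t + b t)%N].

Lemma FPr_le (T : Type) s d (J : nat -> T -> 'I_s) (S : nat -> T -> natvec d) j k :
  (forall n w, vlt (S n w) (S n.+1 w)) ->
  forall N m w, FPr J S j k N m w -> vle (S m.+1 w) k.
Proof.
move=> hlt; elim=> [|N IH] m w //= [[_ ->]|[_ /IH h]] t //.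
exact: leq_trans ((hlt m.+1 w).1 t) (h t).
Qed.

Lemma stepA (R : realType) (dT : measure_display) (T : measurableType dT)
  (P : probability T R) s d (J : nat -> T -> 'I_s) (S : nat -> T -> natvec d) q j k :
  is_MRC P J S q -> forall N n js ss, vle (ss n) k ->
  P (history J S n js ss `&` FPr J S j k N n) =
  ((Phi q j N (js n) (vsub k (ss n)))%:E * P (history J S n js ss))%E.
Proof.
move=> HM; have [mJ mS _ hlt _] := HM.
elim=> [|N IH] n js ss hk.
  by rewrite /= setI0 measure0 mul0e.
set H := history J S n js ss.
have mH : measurable H := hist_meas mJ mS n js ss.
set k' := vsub k (ss n).
have fH : P H = (fine (P H))%:E by rewrite fineK // fin_num_measure.
set A := [set w | J n.+1 w = j /\ S n.+1 w = k].
set C := [set w | J n.+1 w <> j] `&` FPr J S j k N n.+1.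
have mA : measurable A.
  have -> : A = [set w | J n.+1 w = j] `&` [set w | S n.+1 w = k] by [].
  exact: measurableI.
have mC : measurable C.
  apply: measurableI; [exact: (measurableC (mJ _ _))|exact: FPr_meas].
rewrite (_ : FPr J S j k N.+1 n = A `|` C) // setIUr.
have -> : P ((H `&` A) `|` (H `&` C)) = (P (H `&` A) + P (H `&` C))%E.
  apply: measureU; [exact: measurableI|exact: measurableI|].
  by apply/seteqP; split => w //= [[_ [Jj _]] [_ [Jn _]]].
have hA : P (H `&` A) = _ := MRC' (n:=n) (ss:=ss) (x:=k) HM js j hk.
rewrite hA.
have -> : P (H `&` C) = (\sum_(l : {dffun forall t : 'I_d, 'I_(k' t).+1})
    P ((H `&` C) `&` [set w | S n.+1 w = vadd (ss n) (lv l)]))%E.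
  apply: part_fin; first last.
- move=> w [hw [_ hF]].
  have hx : vle (S n.+1 w) k :=
    fun t => leq_trans ((hlt n.+1 w).1 t) (FPr_le hlt hF t).
  have hn : vle (ss n) (S n.+1 w) by rewrite -(hw n (leqnn n)).2; case: (hlt n w).
  have [l hl] := @mk_l d k' (vsub (S n.+1 w) (ss n)) (fun t =>
     ltac:(rewrite !ffunE; exact: leq_sub2r)).
  exists l; rewrite /= hl; apply/ffunP => t; rewrite !ffunE subnKC //.
- move=> l l' ll'; apply/seteqP; split => w //= [-> e].
  move: ll'; suff -> : l = l' by rewrite eqxx.
  apply: lv_inj; apply/ffunP => t; move/ffunP: e => /(_ t); rewrite !ffunE.
  rewrite [X in _ = X -> _]ffunE [lv _ t]ffunE. rewrite ?[lv _ t]ffunE.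
  by move=> /eqP; rewrite eqn_add2l => /eqP.
- by move=> l; exact: mS.
- exact: measurableI.
have term : forall l : {dffun forall t : 'I_d, 'I_(k' t).+1},
  P (H `&` C `&` [set w | S n.+1 w = vadd (ss n) (lv l)]) =
  (\sum_(r < s) ((if r == j then 0 else
     Phi q j N r [ffun t => (k' t - l t)%N] * q (js n) r (lv l) * fine (P H))%:E))%E.
  move=> l; set x := vadd (ss n) (lv l).
  have hx : vle (ss n) x by move=> t; rewrite ffunE leq_addr.
  have hxk : vle x k.
    move=> t; have e : k' t = (k t - ss n t)%N by rewrite /k' ffunE.
    have h : (nat_of_ord (l t) <= k t - ss n t)%N by rewrite -e -ltnS ltn_ord.
    rewrite /x /vadd /lv !ffunE.
    by rewrite -(subnKC (hk t)) leq_add2l.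
  have -> : P (H `&` C `&` [set w | S n.+1 w = x]) =
    (\sum_(r < s) P (H `&` C `&` [set w | S n.+1 w = x] `&` [set w | J n.+1 w = r]))%E.
    apply: part_fin.
    - apply: measurableI; [exact: measurableI|exact: mS].
    - by move=> r; exact: mJ.
    - by move=> r r' rr'; apply/seteqP; split => w //= [-> e]; move: rr'; rewrite e eqxx.
    - by move=> w _; exists (J n.+1 w).
  apply: eq_bigr => r _.
  case: eqVneq => [->|rj].
    rewrite (_ : _ `&` _ = set0) ?measure0 //.
    by apply/seteqP; split => w //= [[[_ [Jn _]] _] Jr].
  pose js' := fun m => if m == n.+1 then r else js m.
  pose ss' := fun m => if m == n.+1 then x else ss m.
  have Eh : history J S n.+1 js' ss' = H `&` [set w | J n.+1 w = r /\ S n.+1 w = x].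
    rewrite hist_S (@hist_ext _ _ _ J S n js' ss' js ss) /js' /ss' ?eqxx //.
    by move=> m mn; rewrite (ltn_eqF (leq_ltn_trans mn (ltnSn n))).
  have -> : H `&` C `&` [set w | S n.+1 w = x] `&` [set w | J n.+1 w = r] =
      history J S n.+1 js' ss' `&` FPr J S j k N n.+1.
    rewrite Eh; apply/seteqP; split => w /=.
      by move=> [[[hw [_ hF]] Sx] Jr].
    move=> [[hw [Jr Sx]] hF]; split => //; split => //; split => //.
    by split => //= Jn; move: rj; rewrite -Jr Jn eqxx.
  have hss : vle (ss' n.+1) k by rewrite /ss' eqxx.
  etransitivity; first exact: (IH n.+1 js' ss' hss).
  rewrite Eh.
  have hA' : P (H `&` [set w | J n.+1 w = r /\ S n.+1 w = x]) = _ :=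
    MRC' (n:=n) (ss:=ss) (x:=x) HM js r hx.
  rewrite hA' [in LHS]fH /js' /ss' eqxx -!EFinM mulrA.
  have e1 : vsub k x = [ffun t => (k' t - l t)%N].
    apply/ffunP => t; rewrite [RHS]ffunE [LHS]ffunE /x /vadd [vadd _ _ _]ffunE [lv _ _]ffunE subnDA.
    by congr (_ - _)%N; rewrite /k' ffunE.
  have e2 : vsub x (ss n) = lv l.
    by apply/ffunP => t; rewrite /x /vadd !ffunE addKn.
  by rewrite e1 e2.
have -> : (\sum_(l : {dffun forall t : 'I_d, 'I_(k' t).+1}) P (H `&` C `&` [set w | S n.+1 w = vadd (ss n) (lv l)]))%E =
  (\sum_(l : {dffun forall t : 'I_d, 'I_(k' t).+1}) \sum_(r < s) ((if r == j then 0 else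
     Phi q j N r [ffun t => (k' t - l t)%N] * q (js n) r (lv l) * fine (P H))%:E))%E.
  by apply: eq_bigr => l _; exact: term.
under eq_bigr => l _ do rewrite sumEFin.
rewrite sumEFin -/H fH -!EFinM -EFinD; congr EFin.
rewrite /= mulrDl; congr (_ + _).
rewrite big_distrl /= exchange_big /= [RHS]big_mkcond /=.
apply: eq_bigr => r _.
case: eqVneq => [->|rj] /=; first by rewrite big1.
rewrite /mrconv big_distrl /=; apply: eq_bigr => l _.
by congr (_ * _); rewrite mulrC.
Qed.
Lemma FPr_char (T : Type) s d (J : nat -> T -> 'I_s) (S : nat -> T -> natvec d) j k N m w :
  FPr J S j k N m w <-> exists l, [/\ (m < l)%N, (l <= m + N)%N, J l w = j,
     (forall l', (m < l')%N -> (l' < l)%N -> J l' w <> j) & S l w = k].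
Proof.
elim: N m => [|N IH] m /=.
  by split => [//|[l [ml lm _ _ _]]]; clear -ml lm; lia.
split.
- case=> [[Jj Sk]|[Jn /IH [l [ml lm Jl hl Sl]]]].
    exists m.+1; split => //; first by clear; lia.
    by move=> l' ml' l'm; clear -ml' l'm; lia.
  exists l; split => //; first by clear -ml; lia.
    by clear -lm; lia.
  move=> l' ml' l'l; case: (eqVneq l' m.+1) => [->//|ne].
  by apply: hl => //; clear -ml' ne; lia.
- move=> [l [ml lm Jl hl Sl]]; case: (eqVneq l m.+1) => [e|ne].
    by left; rewrite -e.
  right; split; first by apply: hl => //; clear -ml ne; lia.
  apply/IH; exists l; split => //; first by clear -ml ne; lia.
    by clear -lm; lia.
  by move=> l' ml' l'l; apply: hl => //; clear -ml'; lia.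
Qed.

Lemma vlt_sum d (a b : natvec d) : vlt a b -> (\sum_t a t < \sum_t b t)%N.
Proof.
move=> [le ne].
have [t ht] : exists t, (a t < b t)%N.
  case: (pickP (fun t => (a t < b t)%N)) => [t ht|h]; first by exists t.
  exfalso; apply: ne; apply/ffunP => t; apply/eqP.
  by rewrite eqn_leq le /= leqNgt h.
rewrite (bigD1 t) //= [X in (_ < X)%N](bigD1 t) //=.
by rewrite -addSn leq_add // leq_sum.
Qed.

Lemma sumS (T : Type) d (S : nat -> T -> natvec d) w :
  (forall n, vlt (S n w) (S n.+1 w)) -> forall l, (l <= \sum_t S l w t)%N.
Proof.
move=> hlt; elim=> [//|l IH]; exact: leq_ltn_trans IH (vlt_sum (hlt l)).
Qed.

Lemma fp_eq (T : Type) s d (J : nat -> T -> 'I_s) (S : nat -> T -> natvec d) j (k : natvec d) N :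
  (forall n w, vlt (S n w) (S n.+1 w)) -> (\sum_t k t < N)%N ->
  first_passage_at J S j k = FPr J S j k N 0.
Proof.
move=> hlt hN; apply/seteqP; split => w /=.
  move=> [l [l0 Jl hl Sl]]; apply/FPr_char; exists l; split => //.
  have := sumS (hlt^~ w) l; rewrite Sl add0n => h; lia.
by move/FPr_char => [l [l0 _ Jl hl Sl]]; exists l; split.
Qed.

Lemma P_restrict (R : realType) (dT : measure_display) (T : measurableType dT)
  (P : probability T R) (H X : set T) :
  measurable H -> measurable X -> P H = 1%E -> P X = P (H `&` X).
Proof.
move=> mH mX PH.
transitivity (P (X `\` H) + P (X `&` H))%E; first exact: measureDI.
rewrite setIC.
have -> : P (X `\` H) = 0%E.
  apply: (subset_measure0 (measurableD mX mH) (measurableC mH)); first by move=> w [].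
  transitivity (1 - P H)%E; first exact: probability_setC.
  by rewrite PH subee.
by rewrite add0e.

Qed.

Lemma g_Phi (R : realType) (dT : measure_display) (T : measurableType dT)
  (s d : nat) (P : 'I_s -> probability T R)
  (J : nat -> T -> 'I_s) (S : nat -> T -> natvec d)
  (q : 'I_s -> 'I_s -> natvec d -> R) :
  (forall i : 'I_s, P i [set w | J 0%N w = i] = 1%E) ->
  (forall i : 'I_s, is_MRC (P i) J S q) ->
  forall a j (x : natvec d) N, (\sum_t x t < N)%N ->
  g_fun P J S a j x = Phi q j N a x.
Proof.
move=> hP0 hM a j x N hN.
have [mJ mS hS0 hlt _] := hM a.
rewrite /g_fun (@fp_eq _ _ _ J S j x N hlt hN).
set H := history J S 0 (fun _ => a) (fun _ => vzero d).
have eH : H = [set w | J 0%N w = a].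
  rewrite /H hist_0; apply/seteqP; split => w /=; first by case.
  by move=> ->; split => //; rewrite hS0.
have mH : measurable H := hist_meas mJ mS 0 _ _.
rewrite (P_restrict (P := P a) mH (@FPr_meas _ _ _ _ J S j x mJ mS N 0)); last by rewrite eH hP0.
rewrite (@stepA _ _ _ (P a) _ _ J S q j x (hM a) N 0 (fun=> a) (fun=> vzero d)); last by move=> t; rewrite ffunE.
rewrite -/H eH hP0 mule1 /=; congr (fine (EFin (Phi q j N a _))).
by apply/ffunP => t; rewrite !ffunE subn0.

Qed.

Lemma PhiS (R : realType) s d (q : 'I_s -> 'I_s -> natvec d -> R) j N a x :
  Phi q j N.+1 a x = q a j x + \sum_(r < s | r != j) mrconv (q a r) (Phi q j N r) x.
Proof. by []. Qed.

Unset Implicit Arguments.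

Theorem proposition11 (R : realType) (dT : measure_display) (T : measurableType dT)
  (s d : nat) (P : 'I_s -> probability T R)
  (J : nat -> T -> 'I_s) (S : nat -> T -> natvec d)
  (q : 'I_s -> 'I_s -> natvec d -> R) :
  (forall i : 'I_s, P i [set w | J 0%N w = i] = 1%E) ->
  (forall i : 'I_s, is_MRC (P i) J S q) ->
  forall (i j : 'I_s) (k : natvec d),
    g_fun P J S i j k
    = q i j k + \sum_(r < s | r != j) mrconv (q i r) (g_fun P J S r j) k.
Proof.
move=> hP0 hM i j k.
set N := (\sum_t k t).+1.
rewrite (g_Phi hP0 hM i j (N := N.+1)); last by rewrite /N ltnS leqW.
rewrite PhiS.
congr (_ + _); apply: eq_bigr => r _; rewrite /mrconv; apply: eq_bigr => l _.
congr (_ * _); symmetry; apply: (g_Phi hP0 hM).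
by rewrite /N ltnS; apply: leq_sum => t _; rewrite ffunE leq_subr.

Qed.
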